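(* Let $(X,x^* )$ be a pointed topological space and $n\geq 1$. Then $\pi_n^{top}(X,x^* )$ is a homogeneous space, i.e. for any two elements $a,b\in\pi_n^{top}(X,x^* )$ there is a homeomorphism of $\pi_n^{top}(X,x^* )$ onto itself sending $a$ to $b$.
   Context: $\pi_n^{top}(X,x^* )$ denotes the $n$-th homotopy group $\pi_n(X,x^* )$ endowed with the quotient topology induced by the map $\Omega^n(X,x^* )\to\pi_n(X,x^* )$, $f\mapsto[f]$, where $\Omega^n(X,x^* )$ is the space of maps $(I^n,\partial I^n)\to(X,x^* )$ with the compact-open topology. *)

(* Defs.v *)
From HB Require Import structures.
From mathcomp Require Import all_boot all_order all_algebra.
From mathcomp Require Import all_classical all_reals all_analysis.
Set Implicit Arguments. Unset Strict Implicit. Unset Printing Implicit Defensive.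
Import Order.TTheory GRing.Theory Num.Theory.
Import numFieldNormedType.Exports.
Local Open Scope classical_set_scope.
Local Open Scope ring_scope.

Definition cube_set (R : realType) (n : nat) : set 'rV[R]_n :=
  [set x | forall i : 'I_n, 0 <= x ord0 i <= 1].
Arguments cube_set : clear implicits.
Definition cube (R : realType) (n : nat) : topologicalType :=
  set_type (cube_set R n).

Definition unit_set (R : realType) : set R := [set t | 0 <= t <= 1].
Arguments unit_set : clear implicits.
Definition unitI (R : realType) : topologicalType := set_type (unit_set R).

Definition cube_boundary (R : realType) (n : nat) : set (cube R n) :=
  [set s : cube R n | exists i : 'I_n, (proj1_sig s) ord0 i = 0 \/ (proj1_sig s) ord0 i = 1].

Definition Omega_set (R : realType) (n : nat) (X : topologicalType) (x0 : X)
  : set {compact-open, cube R n -> X} :=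
  [set f | continuous (f : cube R n -> X) /\
           forall s, cube_boundary s -> f s = x0].
Definition Omega (R : realType) (n : nat) (X : topologicalType) (x0 : X)
  : topologicalType := set_type (@Omega_set R n X x0).
Arguments Omega_set : clear implicits.
Arguments Omega : clear implicits.

Definition rel_homotopic (R : realType) (n : nat) (X : topologicalType) (x0 : X)
  (f g : Omega R n X x0) : Prop :=
  exists H : cube R n * unitI R -> X,
    [/\ continuous H,
        forall s t, val t = 0 -> H (s, t) = (val f : cube R n -> X) s,
        forall s t, val t = 1 -> H (s, t) = (val g : cube R n -> X) s &
        forall s t, cube_boundary s -> H (s, t) = x0].

Definition hclass (R : realType) (n : nat) (X : topologicalType) (x0 : X)
  (f : Omega R n X x0) : set (Omega R n X x0) := [set g | rel_homotopic f g].

Definition pin_set (R : realType) (n : nat) (X : topologicalType) (x0 : X)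
  : set (set (Omega R n X x0)) := [set C | exists f, C = hclass f].
Definition pin_top (R : realType) (n : nat) (X : topologicalType) (x0 : X)
  : Type := set_type (@pin_set R n X x0).
Arguments pin_set : clear implicits.
Arguments pin_top : clear implicits.

HB.instance Definition _ R n X x0 := Choice.on (@pin_top R n X x0).

Lemma hclass_in_pin (R : realType) (n : nat) (X : topologicalType) (x0 : X)
  (f : Omega R n X x0) : hclass f \in @pin_set R n X x0.
Proof. by rewrite inE; exists f. Qed.

Definition pin_proj (R : realType) (n : nat) (X : topologicalType) (x0 : X)
  (f : Omega R n X x0) : pin_top R n X x0 :=
  exist _ (hclass f) (hclass_in_pin f).

Definition pin_open (R : realType) (n : nat) (X : topologicalType) (x0 : X)
  (U : set (pin_top R n X x0)) : Prop := open (@pin_proj R n X x0 @^-1` U).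

Program Definition pin_topology_mixin (R : realType) (n : nat)
  (X : topologicalType) (x0 : X) :=
  @isOpenTopological.Build (pin_top R n X x0) (@pin_open R n X x0) _ _ _.
Next Obligation. by move=> *; rewrite /pin_open preimage_setT; exact: openT. Qed.
Next Obligation. by move=> ? ? ? ? A B oA oB; exact: (openI oA oB). Qed.
Next Obligation.
by move=> ? ? ? ? I f ofi; rewrite /pin_open preimage_bigcup;
   apply: bigcup_open => i _; exact: ofi.
Qed.
HB.instance Definition _ R n X x0 := @pin_topology_mixin R n X x0.

Definition pin (R : realType) (n : nat) (X : topologicalType) (x0 : X)
  : topologicalType := pin_top R n X x0.
Arguments pin : clear implicits.

Definition homeomorphism (T : topologicalType) (h : T -> T) : Prop :=
  exists g : T -> T, [/\ continuous h, continuous g, cancel h g & cancel g h].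

(* Main.v *)
Set Warnings "-notation-overridden,-ambiguous-paths,-notation-incompatible-prefix".
Require Import Defs.
From HB Require Import structures.
From mathcomp Require Import all_boot all_order all_algebra.
From mathcomp Require Import all_classical all_reals all_analysis.
From mathcomp Require Import lra.
Set Implicit Arguments. Unset Strict Implicit. Unset Printing Implicit Defensive.
Import Order.TTheory GRing.Theory Num.Theory.
Import numFieldNormedType.Exports.
Local Open Scope classical_set_scope.
Local Open Scope ring_scope.
Lemma row_cont (T : topologicalType) (R : realType) n (f : 'I_n -> T -> R) :
  (forall i, continuous (f i)) -> continuous (fun t => \row_i f i t).
Proof.
move=> cf t A [P Pn sPA]; rewrite /= nbhs_simpl /=.
have : \forall s \near t, forall i : 'I_1, forall j : 'I_n, P i j (f j s).
  apply: filter_forall => i; apply: filter_forall => j.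
  have := Pn i j; rewrite mxE => /cf; done.
apply: filterS => s Hs; apply: sPA => i j; rewrite mxE; exact: Hs.
Qed.

Definition clamp {R : realType} (v : R) : R := Num.min (Num.max v 0) 1.

Lemma clamp_cont (R : realType) : continuous (@clamp R).
Proof.
have -> : @clamp R = (fun v : R => Num.max v 0) \min (fun=> 1) by [].
apply: min_fun_continuous; last by move=> x; apply: cvg_cst.
have -> : (fun v : R => Num.max v 0) = id \max (fun=> 0) by [].
by apply: max_fun_continuous => x; [apply: cvg_id | apply: cvg_cst].
Qed.

Lemma clamp01 (R : realType) (v : R) : 0 <= clamp v <= 1.
Proof. rewrite /clamp; apply/andP; split.
  by rewrite le_min ler01 le_max lexx orbT.
by rewrite ge_min lexx orbT.
Qed.

Lemma clampE (R : realType) (v : R) : 0 <= v <= 1 -> clamp v = v.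
Proof. case/andP => h0 h1; rewrite /clamp.
rewrite (_ : Num.max v 0 = v); last by apply/max_idPl.
by apply/min_idPl.
Qed.

Lemma comp_cont (A B C : topologicalType) (f : A -> B) (g : B -> C) :
  continuous f -> continuous g -> continuous (fun x => g (f x)).
Proof. by move=> cf cg x; apply: continuous_comp; [exact: cf | exact: cg]. Qed.

Lemma fst_cont (A B : topologicalType) : continuous (@fst A B).
Proof. by move=> p; apply: cvg_fst. Qed.
Lemma snd_cont (A B : topologicalType) : continuous (@snd A B).
Proof. by move=> p; apply: cvg_snd. Qed.
Lemma pair_cont (T A B : topologicalType) (f : T -> A) (g : T -> B) :
  continuous f -> continuous g -> continuous (fun t => (f t, g t)).
Proof. by move=> cf cg t; apply: cvg_pair; [exact: cf | exact: cg]. Qed.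

Lemma val_cont (R : realType) n : continuous (fun s : cube R n => val s).
Proof. exact: (@initial_continuous _ _ (@set_val _ (cube_set R n))). Qed.

Lemma mkC_in (R : realType) n (x : 'rV[R]_n) :
  (\row_i clamp (x ord0 i)) \in cube_set R n.
Proof. by apply/mem_set => i; rewrite mxE; exact: clamp01. Qed.

Lemma cube01 (R : realType) n (s : cube R n) i : 0 <= val s ord0 i <= 1.
Proof. by case: s => x hx; have h := set_mem hx; exact: (h i). Qed.

Definition mkC (R : realType) n (x : 'rV[R]_n) : cube R n :=
  exist (fun y : 'rV[R]_n => y \in cube_set R n) _ (mkC_in x).

Lemma mkC_cont (R : realType) n : continuous (@mkC R n).
Proof.
apply: (@continuous_comp_initial _ _ _ (@set_val _ (cube_set R n))).
have -> : set_val \o @mkC R n = (fun x => \row_i clamp (x ord0 i)).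
  by apply: funext => x; rewrite /= set_valE.
apply: row_cont => i.
apply: comp_cont; last exact: clamp_cont.
exact: coord_continuous.
Qed.

Lemma mkC_val (R : realType) n (s : cube R n) : mkC (val s) = s.
Proof.
apply: val_inj => /=; apply/rowP => i; rewrite mxE clampE //.
exact: cube01.
Qed.

Definition c1 (R : realType) m (s : cube R m.+1) : R := val s ord0 ord0.

Lemma c1_cont (R : realType) m : continuous (@c1 R m).
Proof.
apply: (@comp_cont _ _ _ (fun s : cube R m.+1 => val s)
  (fun M : 'rV[R]_m.+1 => M ord0 ord0)); first exact: val_cont.
exact: coord_continuous.
Qed.

Lemma c1_01 (R : realType) m (s : cube R m.+1) : 0 <= c1 s <= 1.
Proof. by case: s => x hx; have h := set_mem hx; exact: (h ord0). Qed.

Definition setc (R : realType) m (s : cube R m.+1) (v : R) : cube R m.+1 :=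
  mkC (\row_i if i == ord0 then v else val s ord0 i).

Lemma setc_cont (R : realType) m :
  continuous (fun p : cube R m.+1 * R => setc p.1 p.2).
Proof.
rewrite /setc.
apply: (@comp_cont _ _ _ (fun p : cube R m.+1 * R =>
   \row_i if i == ord0 then p.2 else val p.1 ord0 i) (@mkC R m.+1)); last exact: mkC_cont.
apply: row_cont => i.
case: (i == ord0); first exact: snd_cont.
apply: (@comp_cont _ _ _ fst (fun s : cube R m.+1 => val s ord0 i)).
  exact: fst_cont.
apply: (@comp_cont _ _ _ (fun s : cube R m.+1 => val s)
  (fun M : 'rV[R]_m.+1 => M ord0 i)); first exact: val_cont.
exact: coord_continuous.
Qed.

Lemma c1_setc (R : realType) m (s : cube R m.+1) v : c1 (setc s v) = clamp v.
Proof. by rewrite /c1 /= !mxE eqxx. Qed.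

Lemma setc_other (R : realType) m (s : cube R m.+1) v i : i != ord0 ->
  val (setc s v) ord0 i = val s ord0 i.
Proof.
move=> /negPf hi; rewrite /= !mxE hi clampE //.
exact: cube01.
Qed.

Lemma setc_setc (R : realType) m (s : cube R m.+1) v w :
  setc (setc s v) w = setc s w.
Proof.
apply: val_inj; apply/rowP => i; rewrite /setc /= !mxE.
case: eqP => // _; rewrite clampE //; exact: clamp01.
Qed.

Lemma setc_c1 (R : realType) m (s : cube R m.+1) : setc s (c1 s) = s.
Proof.
rewrite -[RHS]mkC_val; apply: val_inj; apply/rowP => i; rewrite /setc /= !mxE.
by case: eqP => // ->.
Qed.

Lemma setc_clamp (R : realType) m (s : cube R m.+1) v : setc s (clamp v) = setc s v.
Proof.
apply: val_inj; apply/rowP => i; rewrite /setc /= !mxE.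
case: eqP => // _; rewrite clampE //; exact: clamp01.
Qed.

Lemma paste_cont (T U : topologicalType) (A B : set T) (f g1 g2 : T -> U) :
  closed A -> closed B -> (forall x, A x \/ B x) -> continuous g1 -> continuous g2 ->
  (forall x, A x -> f x = g1 x) -> (forall x, B x -> f x = g2 x) -> continuous f.
Proof.
move=> cA cB AB c1 c2 e1 e2; apply/continuous_subspace_setT.
have -> : [set: T] = A `|` B.
  by apply/seteqP; split => x // _; case: (AB x); [left|right].
apply: withinU_continuous => //.
  apply: (@subspace_eq_continuous _ _ _ g1); last exact: continuous_subspaceT.
  by move=> x /set_mem /e1 h; symmetry; exact: h.
apply: (@subspace_eq_continuous _ _ _ g2); last exact: continuous_subspaceT.
by move=> x /set_mem /e2 h; symmetry; exact: h.
Qed.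

Lemma closed_le_cont (T : topologicalType) (R : realType) (h : T -> R) (c : R) :
  continuous h -> closed [set x | h x <= c].
Proof. move=> ch; exact: (proj1 (continuous_closedP h) ch _ (@closed_le R c)). Qed.

Lemma closed_ge_cont (T : topologicalType) (R : realType) (h : T -> R) (c : R) :
  continuous h -> closed [set x | c <= h x].
Proof. move=> ch; exact: (proj1 (continuous_closedP h) ch _ (@closed_ge R c)). Qed.

Lemma subc_cont (R : realType) (c : R) : continuous (fun v : R => v - c).
Proof. by move=> x; apply: cvgB; [exact: cvg_id | exact: cvg_cst]. Qed.

Definition join (R : realType) m (X : topologicalType) (p q : cube R m.+1 -> X)
  (v : R) (s : cube R m.+1) : X :=
  if v <= 1 then p (setc s v) else q (setc s (v - 1)).

Lemma join_cont (R : realType) m (X T : topologicalType)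
  (P Q : T -> cube R m.+1 -> X) :
  continuous (fun z : T * cube R m.+1 => P z.1 z.2) ->
  continuous (fun z : T * cube R m.+1 => Q z.1 z.2) ->
  (forall t s, P t (setc s 1) = Q t (setc s 0)) ->
  continuous (fun z : T * (R * cube R m.+1) => join (P z.1) (Q z.1) z.2.1 z.2.2).
Proof.
move=> cP cQ e.
have c21 : continuous (fun z : T * (R * cube R m.+1) => z.2.1).
  apply: (@comp_cont _ _ _ snd fst); [exact: snd_cont | exact: fst_cont].
have c22 : continuous (fun z : T * (R * cube R m.+1) => z.2.2).
  apply: (@comp_cont _ _ _ snd snd); [exact: snd_cont | exact: snd_cont].
pose Z := (T * (R * cube R m.+1))%type.
apply: (@paste_cont Z X [set z : Z | z.2.1 <= 1] [set z : Z | 1 <= z.2.1]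
  (fun z : Z => join (P z.1) (Q z.1) z.2.1 z.2.2)
  (fun z : Z => P z.1 (setc z.2.2 z.2.1)) (fun z : Z => Q z.1 (setc z.2.2 (z.2.1 - 1)))).
- exact: closed_le_cont.
- exact: closed_ge_cont.
- by move=> z; case: (lerP z.2.1 1) => h; [left | right; apply: ltW].
- apply: (@comp_cont _ _ _ (fun z : T * (R * cube R m.+1) => (z.1, setc z.2.2 z.2.1))
    (fun z : T * cube R m.+1 => P z.1 z.2)) => //.
  apply: pair_cont; first exact: fst_cont.
  apply: (@comp_cont _ _ _ (fun z : T * (R * cube R m.+1) => (z.2.2, z.2.1))
    (fun p : cube R m.+1 * R => setc p.1 p.2)); last exact: setc_cont.
  exact: pair_cont.
- apply: (@comp_cont _ _ _ (fun z : T * (R * cube R m.+1) => (z.1, setc z.2.2 (z.2.1 - 1)))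
    (fun z : T * cube R m.+1 => Q z.1 z.2)) => //.
  apply: pair_cont; first exact: fst_cont.
  apply: (@comp_cont _ _ _ (fun z : T * (R * cube R m.+1) => (z.2.2, z.2.1 - 1))
    (fun p : cube R m.+1 * R => setc p.1 p.2)); last exact: setc_cont.
  apply: pair_cont => //.
  apply: (@comp_cont _ _ _ (fun z : T * (R * cube R m.+1) => z.2.1) (fun v => v - 1)) => //.
  exact: subc_cont.
- by move=> z /= h; rewrite /join h.
- move=> z /= h; rewrite /join; case: ifP => h1 //.
  have -> : z.2.1 = 1 by apply/eqP; rewrite eq_le h1 h.
  by rewrite e subrr.
Qed.

Lemma mulc_cont (R : realType) (c : R) : continuous (fun v : R => c * v).
Proof. by move=> x; apply: cvgM; [exact: cvg_cst | exact: cvg_id]. Qed.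

Lemma csub_cont (R : realType) (c : R) : continuous (fun v : R => c - v).
Proof. by move=> x; apply: cvgB; [exact: cvg_cst | exact: cvg_id]. Qed.

Lemma valI_cont (R : realType) : continuous (fun t : unitI R => val t).
Proof. exact: (@initial_continuous _ _ (@set_val _ (unit_set R))). Qed.

Lemma unit01 (R : realType) (t : unitI R) : 0 <= val t <= 1.
Proof. by case: t => x hx; have h := set_mem hx; exact: h. Qed.

Lemma mkI_in (R : realType) (v : R) : clamp v \in unit_set R.
Proof. by apply/mem_set; exact: clamp01. Qed.

Definition mkI (R : realType) (v : R) : unitI R :=
  exist (fun y : R => y \in unit_set R) _ (mkI_in v).

Lemma mkI_cont (R : realType) : continuous (@mkI R).
Proof.
apply: (@continuous_comp_initial _ _ _ (@set_val _ (unit_set R))).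
have -> : set_val \o @mkI R = @clamp R.
  by apply: funext => x; rewrite /= set_valE.
exact: clamp_cont.
Qed.

Lemma valI_mkI (R : realType) (v : R) : val (mkI v) = clamp v.
Proof. by []. Qed.

Lemma clamp0 (R : realType) (v : R) : v <= 0 -> clamp v = 0.
Proof. by move=> h; rewrite /clamp (max_idPr h) (min_idPl ler01). Qed.

Lemma clamp1 (R : realType) (v : R) : 1 <= v -> clamp v = 1.
Proof.
move=> h; rewrite /clamp (max_idPl (le_trans ler01 h)); exact/min_idPr.
Qed.

Lemma ev_cont (R : realType) n (X : topologicalType) (x0 : X) (f : Omega R n X x0) :
  continuous (val f : cube R n -> X).
Proof. by case: (set_mem (valP f)). Qed.

Lemma ev_bd (R : realType) n (X : topologicalType) (x0 : X) (f : Omega R n X x0) s :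
  cube_boundary s -> (val f : cube R n -> X) s = x0.
Proof. by case: (set_mem (valP f)) => _; apply. Qed.

Lemma rh_refl (R : realType) n (X : topologicalType) (x0 : X) (f : Omega R n X x0) :
  rel_homotopic f f.
Proof.
exists (fun z => (val f : cube R n -> X) z.1); split => //.
- apply: (@comp_cont _ _ _ fst); [exact: fst_cont | exact: ev_cont].
- by move=> s t hs /=; exact: ev_bd.
Qed.

Lemma rh_sym (R : realType) n (X : topologicalType) (x0 : X) (f g : Omega R n X x0) :
  rel_homotopic f g -> rel_homotopic g f.
Proof.
case=> H [cH H0 H1 Hb].
exists (fun z => H (z.1, mkI (1 - val z.2))); split.
- apply: (@comp_cont _ _ _ (fun z : cube R n * unitI R => (z.1, mkI (1 - val z.2))) H) => //.
  apply: pair_cont; first exact: fst_cont.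
  apply: (@comp_cont _ _ _ (fun z : cube R n * unitI R => 1 - val z.2) (@mkI R)); last exact: mkI_cont.
  apply: (@comp_cont _ _ _ (fun z : cube R n * unitI R => val z.2) (fun v => 1 - v)); last exact: csub_cont.
  apply: (@comp_cont _ _ _ snd (fun t : unitI R => val t)); [exact: snd_cont | exact: valI_cont].
- by move=> s t /= ->; apply: H1; rewrite valI_mkI subr0 clampE // lexx ler01.
- by move=> s t /= ->; apply: H0; rewrite valI_mkI subrr clampE // lexx ler01.
- by move=> s t hs; exact: Hb.
Qed.

Lemma rh_trans (R : realType) n (X : topologicalType) (x0 : X) (f g h : Omega R n X x0) :
  rel_homotopic f g -> rel_homotopic g h -> rel_homotopic f h.
Proof.
case=> H [cH H0 H1 Hb]; case=> K [cK K0 K1 Kb].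
pose Z := (cube R n * unitI R)%type.
have cv : continuous (fun z : Z => val z.2).
  apply: (@comp_cont _ _ _ snd (fun t : unitI R => val t)); [exact: snd_cont | exact: valI_cont].
have cA : forall (F : cube R n * unitI R -> X) (a : R), continuous F ->
    continuous (fun z : Z => F (z.1, mkI (2 * val z.2 - a))).
  move=> F a cF.
  apply: (@comp_cont _ _ _ (fun z : Z => (z.1, mkI (2 * val z.2 - a))) F) => //.
  apply: pair_cont; first exact: fst_cont.
  apply: (@comp_cont _ _ _ (fun z : Z => 2 * val z.2 - a) (@mkI R)); last exact: mkI_cont.
  apply: (@comp_cont _ _ _ (fun z : Z => 2 * val z.2) (fun v => v - a)); last exact: subc_cont.
  apply: (@comp_cont _ _ _ (fun z : Z => val z.2) (fun v => 2 * v)) => //.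
  exact: mulc_cont.
exists (fun z : Z => if val z.2 <= 2^-1 then H (z.1, mkI (2 * val z.2 - 0))
                     else K (z.1, mkI (2 * val z.2 - 1))); split.
- apply: (@paste_cont Z X [set z : Z | val z.2 <= 2^-1] [set z : Z | 2^-1 <= val z.2] _
    (fun z : Z => H (z.1, mkI (2 * val z.2 - 0))) (fun z : Z => K (z.1, mkI (2 * val z.2 - 1)))).
  + exact: closed_le_cont.
  + exact: closed_ge_cont.
  + by move=> z; case: (lerP (val z.2) 2^-1) => hz; [left | right; apply: ltW].
  + exact: cA.
  + exact: cA.
  + by move=> z /= ->.
  + move=> z /= hz; case: ifP => // hz'.
    have e : val z.2 = 2^-1 by apply/eqP; rewrite eq_le hz hz'.
    rewrite e mulfV ?pnatr_eq0 // subr0 subrr H1; last by rewrite valI_mkI clamp1.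
    by rewrite K0 // valI_mkI clamp0.
- move=> s t /= ->; rewrite ifT ?invr_ge0 ?ler0n //.
  by rewrite H0 // valI_mkI clamp0 // mulr0 subr0.
- move=> s t /= ->; rewrite ifF; last first.
    by apply/negbTE; rewrite -ltNge invf_lt1 // ltr1n.
  by rewrite K1 // valI_mkI clamp1 // mulr1 (_ : 2 - 1 = 1 :> R) // ?lexx // -addrA subrr addr0.
- move=> s t hs /=; case: ifP => _; [exact: Hb | exact: Kb].
Qed.

Lemma pin_proj_eq (R : realType) n (X : topologicalType) (x0 : X) (f g : Omega R n X x0) :
  rel_homotopic f g -> pin_proj f = pin_proj g.
Proof.
move=> fg; apply: val_inj => /=; apply/seteqP; split => h /= hh.
  exact: rh_trans (rh_sym fg) hh.
exact: rh_trans fg hh.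
Qed.

Lemma pin_proj_eqP (R : realType) n (X : topologicalType) (x0 : X) (f g : Omega R n X x0) :
  pin_proj f = pin_proj g -> rel_homotopic f g.
Proof.
move=> /(congr1 val) /= e.
have : hclass g g by exact: rh_refl.
by rewrite -e.
Qed.

Lemma pin_proj_surj (R : realType) n (X : topologicalType) (x0 : X) (c : pin R n X x0) :
  exists f, pin_proj f = c.
Proof.
case: c => C hC; have [f ef] := set_mem hC.
by exists f; apply: val_inj => /=.
Qed.

Definition mkOm (R : realType) n (X : topologicalType) (x0 : X) (f : cube R n -> X)
  (cf : continuous f) (bf : forall s, cube_boundary s -> f s = x0) : Omega R n X x0 :=
  exist (fun y : {compact-open, cube R n -> X} => y \in Omega_set R n X x0)
    f (mem_set (conj cf bf)).

Lemma bd_end (R : realType) m (s : cube R m.+1) v : v <= 0 \/ 1 <= v ->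
  cube_boundary (setc s v).
Proof.
move=> h; exists ord0; have := c1_setc s v; rewrite /c1 => ->.
by case: h => h; [left; exact: clamp0 | right; exact: clamp1].
Qed.

Lemma bd_cases (R : realType) m (s : cube R m.+1) : cube_boundary s ->
  (c1 s = 0 \/ c1 s = 1) \/ (forall v, cube_boundary (setc s v)).
Proof.
case=> i hi; case: (eqVneq i ord0) => [ei|ni]; first by left; rewrite /c1 -ei.
by right => v; exists i; rewrite setc_other.
Qed.

Definition ev (R : realType) n (X : topologicalType) (x0 : X) (f : Omega R n X x0) :
  cube R n -> X := val f.

Lemma join_cont1 (R : realType) m (X : topologicalType) (p q : cube R m.+1 -> X)
  (mu : cube R m.+1 -> R) :
  continuous p -> continuous q -> continuous mu ->
  (forall s, p (setc s 1) = q (setc s 0)) ->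
  continuous (fun s => join p q (mu s) s).
Proof.
move=> cp cq cmu e.
have := @join_cont R m X (cube R m.+1) (fun _ => p) (fun _ => q).
move=> /(_ _ _ (fun _ => e)) J.
apply: (@comp_cont _ _ _ (fun s => (s, (mu s, s)))
  (fun z : cube R m.+1 * (R * cube R m.+1) => join p q z.2.1 z.2.2)).
  apply: pair_cont; first by move=> x; apply: cvg_id.
  by apply: pair_cont => // x; apply: cvg_id.
apply: J.
  by apply: (@comp_cont _ _ _ snd p) => //; exact: snd_cont.
by apply: (@comp_cont _ _ _ snd q) => //; exact: snd_cont.
Qed.

Lemma join_cont2 (R : realType) m (X T : topologicalType) (P Q : T -> cube R m.+1 -> X)
  (mu : cube R m.+1 * T -> R) :
  continuous (fun z : T * cube R m.+1 => P z.1 z.2) ->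
  continuous (fun z : T * cube R m.+1 => Q z.1 z.2) -> continuous mu ->
  (forall t s, P t (setc s 1) = Q t (setc s 0)) ->
  continuous (fun z : cube R m.+1 * T => join (P z.2) (Q z.2) (mu z) z.1).
Proof.
move=> cP cQ cmu e.
have J := @join_cont R m X T P Q cP cQ e.
apply: (@comp_cont _ _ _ (fun z : cube R m.+1 * T => (z.2, (mu z, z.1)))
  (fun z : T * (R * cube R m.+1) => join (P z.1) (Q z.1) z.2.1 z.2.2)) => //.
apply: pair_cont; first exact: snd_cont.
by apply: pair_cont => //; exact: fst_cont.
Qed.

Lemma join_bd (R : realType) m (X : topologicalType) (x0 : X) (p q : cube R m.+1 -> X) v s :
  (forall s, cube_boundary s -> p s = x0) -> (forall s, cube_boundary s -> q s = x0) ->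
  (v <= 0 \/ v = 1 \/ 2 <= v \/ (forall w, cube_boundary (setc s w))) ->
  join p q v s = x0.
Proof.
move=> hp hq h; rewrite /join; case: ifP => hv.
  case: h => [h|[h|[h|h]]].
  - by apply: hp; apply: bd_end; left.
  - by apply: hp; apply: bd_end; right; rewrite h.
  - by exfalso; move: h; rewrite leNgt (le_lt_trans hv) // ltr1n.
  - exact: hp.
case: h => [h|[h|[h|h]]].
- by exfalso; move: hv; rewrite (le_trans h ler01).
- by move: hv; rewrite h lexx.
- apply: hq; apply: bd_end; right; rewrite lerBrDr.
  by move: h; rewrite (_ : 2 = 1 + 1 :> R) // -[1 + 1]natrD.
- exact: hq.
Qed.

Lemma ev_cont' (R : realType) n (X : topologicalType) (x0 : X) (f : Omega R n X x0) :
  continuous (ev f).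
Proof. exact: ev_cont. Qed.

Lemma ev_bd' (R : realType) n (X : topologicalType) (x0 : X) (f : Omega R n X x0) s :
  cube_boundary s -> ev f s = x0.
Proof. exact: ev_bd. Qed.

Lemma ev_agree (R : realType) m (X : topologicalType) (x0 : X) (f g : Omega R m.+1 X x0) s :
  ev f (setc s 1) = ev g (setc s 0).
Proof.
rewrite !ev_bd' //; apply: bd_end; [by left | by right].
Qed.

Lemma Lg_cont (R : realType) m (X : topologicalType) (x0 : X) (g f : Omega R m.+1 X x0) :
  continuous (fun s => join (ev g) (ev f) (2 * c1 s) s).
Proof.
apply: (@join_cont1 R m X (ev g) (ev f) (fun s => 2 * c1 s));
  [exact: ev_cont' | exact: ev_cont' | | exact: ev_agree].
apply: (@comp_cont _ _ _ (@c1 R m) (fun v => 2 * v)); [exact: c1_cont | exact: mulc_cont].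
Qed.

Lemma Lg_bd (R : realType) m (X : topologicalType) (x0 : X) (g f : Omega R m.+1 X x0) s :
  cube_boundary s -> join (ev g) (ev f) (2 * c1 s) s = x0.
Proof.
move=> hs; apply: join_bd; [exact: ev_bd' | exact: ev_bd' |].
case: (bd_cases hs) => [[->|->]|h]; last by right; right; right.
  by left; rewrite mulr0.
by right; right; left; rewrite mulr1.
Qed.

Definition Lg (R : realType) m (X : topologicalType) (x0 : X) (g f : Omega R m.+1 X x0) :
  Omega R m.+1 X x0 := mkOm (@Lg_cont R m X x0 g f) (@Lg_bd R m X x0 g f).

Lemma rev_cont (R : realType) m (X : topologicalType) (x0 : X) (g : Omega R m.+1 X x0) :
  continuous (fun s => ev g (setc s (1 - c1 s))).
Proof.
apply: (@comp_cont _ _ _ (fun s => setc s (1 - c1 s)) (ev g)); last exact: ev_cont'.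
apply: (@comp_cont _ _ _ (fun s => (s, 1 - c1 s)) (fun p : cube R m.+1 * R => setc p.1 p.2));
  last exact: setc_cont.
apply: pair_cont; first by move=> x; apply: cvg_id.
apply: (@comp_cont _ _ _ (@c1 R m) (fun v => 1 - v)); [exact: c1_cont | exact: csub_cont].
Qed.

Lemma rev_bd (R : realType) m (X : topologicalType) (x0 : X) (g : Omega R m.+1 X x0) s :
  cube_boundary s -> ev g (setc s (1 - c1 s)) = x0.
Proof.
move=> hs; apply: ev_bd'; case: (bd_cases hs) => [[->|->]|h] //.
  by apply: bd_end; right; rewrite subr0.
by apply: bd_end; left; rewrite subrr.
Qed.

Definition rev (R : realType) m (X : topologicalType) (x0 : X) (g : Omega R m.+1 X x0) :
  Omega R m.+1 X x0 := mkOm (@rev_cont R m X x0 g) (@rev_bd R m X x0 g).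

Definition cst0 (R : realType) n (X : topologicalType) (x0 : X) : Omega R n X x0 :=
  @mkOm R n X x0 (fun=> x0) (@cst_continuous _ _ x0) (fun _ _ => erefl).

Lemma rev_rev (R : realType) m (X : topologicalType) (x0 : X) (g : Omega R m.+1 X x0) :
  rev (rev g) = g.
Proof.
apply: val_inj; apply: funext => s /=.
rewrite /ev /= setc_setc c1_setc clampE; last first.
  by have := c1_01 s; rewrite subr_ge0 lerBlDr lerDl => /andP[-> ->].
by rewrite opprB addrC subrK setc_c1.
Qed.

Lemma join_setc (R : realType) m (X : topologicalType) (p q : cube R m.+1 -> X) v s w :
  join p q v (setc s w) = join p q v s.
Proof. by rewrite /join !setc_setc. Qed.

Lemma Lg_hom (R : realType) m (X : topologicalType) (x0 : X) (g f f' : Omega R m.+1 X x0) :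
  rel_homotopic f f' -> rel_homotopic (Lg g f) (Lg g f').
Proof.
case=> H [cH H0 H1 Hb].
exists (fun z => join (ev g) (fun s => H (s, z.2)) (2 * c1 z.1) z.1); split.
- apply: (@join_cont2 R m X (unitI R) (fun _ => ev g) (fun t s => H (s, t))).
  + by apply: (@comp_cont _ _ _ snd (ev g)); [exact: snd_cont | exact: ev_cont'].
  + apply: (@comp_cont _ _ _ (fun z : unitI R * cube R m.+1 => (z.2, z.1)) H) => //.
    by apply: pair_cont; [exact: snd_cont | exact: fst_cont].
  + apply: (@comp_cont _ _ _ fst (fun s => 2 * c1 s)); first exact: fst_cont.
    apply: (@comp_cont _ _ _ (@c1 R m) (fun v => 2 * v)); [exact: c1_cont | exact: mulc_cont].
  + move=> t s; rewrite Hb; first by rewrite ev_bd' //; apply: bd_end; right.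
    by apply: bd_end; left.
- move=> s t /= ht; rewrite /join; case: ifP => _; first by [].
  by rewrite H0.
- move=> s t /= ht; rewrite /join; case: ifP => _; first by [].
  by rewrite H1.
- move=> s t hs /=; apply: join_bd; [exact: ev_bd' | by move=> s' hs'; exact: Hb |].
  case: (bd_cases hs) => [[->|->]|h]; last by right; right; right.
    by left; rewrite mulr0.
  by right; right; left; rewrite mulr1.
Qed.

Lemma addf_cont (T : topologicalType) (R : realType) (f g : T -> R) :
  continuous f -> continuous g -> continuous (fun x => f x + g x).
Proof. by move=> cf cg x; apply: cvgD; [exact: cf | exact: cg]. Qed.
Lemma subf_cont (T : topologicalType) (R : realType) (f g : T -> R) :
  continuous f -> continuous g -> continuous (fun x => f x - g x).
Proof. by move=> cf cg x; apply: cvgB; [exact: cf | exact: cg]. Qed.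
Lemma mulf_cont (T : topologicalType) (R : realType) (f g : T -> R) :
  continuous f -> continuous g -> continuous (fun x => f x * g x).
Proof. by move=> cf cg x; apply: cvgM; [exact: cf | exact: cg]. Qed.
Lemma cstf_cont (T : topologicalType) (R : realType) (c : R) :
  continuous (fun _ : T => c).
Proof. by move=> x; apply: cvg_cst. Qed.
Lemma maxf_cont (T : topologicalType) (R : realType) (f g : T -> R) :
  continuous f -> continuous g -> continuous (fun x => Num.max (f x) (g x)).
Proof.
move=> cf cg; have -> : (fun x => Num.max (f x) (g x)) = f \max g by [].
by apply: max_fun_continuous => x; [exact: cf | exact: cg].
Qed.

Lemma Lg_inv (R : realType) m (X : topologicalType) (x0 : X) (g f : Omega R m.+1 X x0) :
  rel_homotopic (Lg (rev g) (Lg g f)) f.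
Proof.
pose Z := (cube R m.+1 * unitI R)%type.
pose mu := fun z : Z => (1 - val z.2) * Num.max (1 - 2 * c1 z.1) (4 * c1 z.1 - 2)
                      + val z.2 * (c1 z.1 + 1).
have cx : continuous (fun z : Z => c1 z.1).
  by apply: (@comp_cont _ _ _ fst (@c1 R m)); [exact: fst_cont | exact: c1_cont].
have ct : continuous (fun z : Z => val z.2).
  by apply: (@comp_cont _ _ _ snd (fun t : unitI R => val t)); [exact: snd_cont | exact: valI_cont].
have cmu : continuous mu.
  rewrite /mu; apply: addf_cont; apply: mulf_cont => //.
  - by apply: subf_cont => //; exact: cstf_cont.
  - apply: maxf_cont; apply: subf_cont; try exact: cstf_cont;
      by apply: mulf_cont => //; exact: cstf_cont.
  - by apply: addf_cont => //; exact: cstf_cont.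
exists (fun z : Z => join (ev g) (ev f) (mu z) z.1); split.
- apply: (@join_cont2 R m X (unitI R) (fun _ => ev g) (fun _ => ev f) mu) => //.
  + by apply: (@comp_cont _ _ _ snd (ev g)); [exact: snd_cont | exact: ev_cont'].
  + by apply: (@comp_cont _ _ _ snd (ev f)); [exact: snd_cont | exact: ev_cont'].
  + by move=> _ s; exact: ev_agree.
- move=> s t ht; rewrite /mu /= ht subr0 mul1r mul0r addr0.
  have := c1_01 s; set x := c1 s => /andP[x0' x1].
  rewrite /join /ev /=; case: (lerP (2 * x) 1) => h.
    rewrite setc_setc c1_setc clampE; last by apply/andP; split; lra.
    rewrite (max_idPl _); last by lra.
    by rewrite ifT //; lra.
  rewrite join_setc c1_setc clampE; last by apply/andP; split; lra.
  rewrite (max_idPr _); last by lra.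
  by have -> : 2 * (2 * x - 1) = 4 * x - 2 by lra.
- move=> s t ht; rewrite /mu /= ht subrr mul0r add0r mul1r.
  have := c1_01 s; set x := c1 s => /andP[x0' x1].
  rewrite /join; case: ifP => h.
    have e : x = 0 by lra.
    rewrite ev_bd'; last by apply: bd_end; right; lra.
    by rewrite ev_bd //; exists ord0; left.
  by rewrite addrK setc_c1.
- move=> s t hs /=; apply: join_bd; [exact: ev_bd' | exact: ev_bd' |].
  case: (bd_cases hs) => [[e|e]|h]; last by right; right; right.
    right; left; rewrite /mu e /=; rewrite (max_idPl _); last by lra.
    by lra.
  right; right; left; rewrite /mu e /=; rewrite (max_idPr _); last by lra.
  by lra.
Qed.

Lemma Lg_rev_cst (R : realType) m (X : topologicalType) (x0 : X) (g : Omega R m.+1 X x0) :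
  rel_homotopic (Lg (rev g) g) (cst0 R m.+1 x0).
Proof.
pose Z := (cube R m.+1 * unitI R)%type.
pose mu := fun z : Z => Num.max (Num.max (1 - 2 * c1 z.1) (2 * c1 z.1 - 1)) (val z.2).
have cx : continuous (fun z : Z => c1 z.1).
  by apply: (@comp_cont _ _ _ fst (@c1 R m)); [exact: fst_cont | exact: c1_cont].
have ct : continuous (fun z : Z => val z.2).
  by apply: (@comp_cont _ _ _ snd (fun t : unitI R => val t)); [exact: snd_cont | exact: valI_cont].
have cmu : continuous mu.
  rewrite /mu; apply: maxf_cont => //; apply: maxf_cont; apply: subf_cont;
    try exact: cstf_cont; by apply: mulf_cont => //; exact: cstf_cont.
exists (fun z : Z => ev g (setc z.1 (mu z))); split.
- apply: (@comp_cont _ _ _ (fun z : Z => setc z.1 (mu z)) (ev g)); last exact: ev_cont'.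
  apply: (@comp_cont _ _ _ (fun z : Z => (z.1, mu z)) (fun p : cube R m.+1 * R => setc p.1 p.2));
    last exact: setc_cont.
  by apply: pair_cont => //; exact: fst_cont.
- move=> s t ht; rewrite /mu /= ht.
  have := c1_01 s; set x := c1 s => /andP[x0' x1].
  rewrite /join /ev /=; case: (lerP (2 * x) 1) => h.
    rewrite setc_setc c1_setc clampE; last by apply/andP; split; lra.
    rewrite (max_idPl (_ : 2 * x - 1 <= 1 - 2 * x)); last by lra.
    by rewrite (max_idPl (_ : 0 <= 1 - 2 * x)) //; lra.
  rewrite (max_idPr (_ : 1 - 2 * x <= 2 * x - 1)); last by lra.
  by rewrite (max_idPl (_ : 0 <= 2 * x - 1)) //; lra.
- move=> s t ht /=; apply: ev_bd'; apply: bd_end; right.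
  by rewrite /mu /= ht le_max lexx orbT.
- move=> s t hs /=; apply: ev_bd'.
  case: (bd_cases hs) => [[e|e]|h]; last exact: h.
    apply: bd_end; right; rewrite /mu /= e le_max; apply/orP; left.
    by rewrite le_max; apply/orP; left; lra.
  apply: bd_end; right; rewrite /mu /= e le_max; apply/orP; left.
  by rewrite le_max; apply/orP; right; lra.
Qed.

Lemma Lg_contO (R : realType) m (X : topologicalType) (x0 : X) (g : Omega R m.+1 X x0) :
  continuous (Lg g).
Proof.
apply: (@continuous_comp_initial _ _ _ (@set_val _ (Omega_set R m.+1 X x0))).
move=> f; have FF : Filter ((set_val \o Lg g) @ nbhs f) by apply: fmap_filter; exact: nbhs_filter.
apply/(compact_open_cvgP _ FF) => K O cK oO hKO.
pose KB := K `&` [set s | 2^-1 <= c1 s].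
pose phi := fun s : cube R m.+1 => setc s (2 * c1 s - 1).
have cphi : continuous phi.
  apply: (@comp_cont _ _ _ (fun s => (s, 2 * c1 s - 1)) (fun p : cube R m.+1 * R => setc p.1 p.2));
    last exact: setc_cont.
  apply: pair_cont; first by move=> x; apply: cvg_id.
  apply: subf_cont; last exact: cstf_cont.
  by apply: mulf_cont; [exact: cstf_cont | exact: c1_cont].
have cKB : compact KB.
  apply: compact_closedI => //; apply: closed_ge_cont; exact: c1_cont.
have cK2 : compact (phi @` KB).
  by apply: continuous_compact => //; exact: continuous_subspaceT.
pose W := [set h : {compact-open, cube R m.+1 -> X} | h @` (phi @` KB) `<=` O].
have oW : open W by exact: compact_open_open.
have oW' : open ((@set_val _ (Omega_set R m.+1 X x0)) @^-1` W).
  exact: (proj1 (continuousP _) (@initial_continuous _ _ (@set_val _ (Omega_set R m.+1 X x0))) W oW).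
have key : forall h : Omega R m.+1 X x0, set_val h @` (phi @` KB) `<=` O ->
    (set_val (Lg g h)) @` K `<=` O.
  move=> h hh _ [s Ks <-]; rewrite set_valE /= /join.
  case: ifP => hs.
    have := hKO (set_val (Lg g f) s); rewrite set_valE /= /join hs; apply.
    by exists s => //; rewrite hs.
  apply: (hh (ev h (phi s))); exists (phi s) => //; exists s => //; split => //=.
  by rewrite /= in hs; move: hs => /negbT; rewrite -ltNge => hs; lra.
rewrite nbhs_simpl /=; apply: (@filterS _ _ _ ((@set_val _ (Omega_set R m.+1 X x0)) @^-1` W)).
  by move=> h /= hW; exact: key.
apply: open_nbhs_nbhs; split => //=.
move=> _ [_ [s [Ks hs] <-] <-]; rewrite set_valE /=.
have := hKO (set_val (Lg g f) s); rewrite set_valE /= /join.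
case: ifP => h2.
  have e : 2 * c1 s = 1 by rewrite /= in hs; lra.
  rewrite /phi e subrr ev_bd; last by apply: bd_end; left.
  rewrite ev_bd' //; last by apply: bd_end; right.
  apply; exists s => //; rewrite e lexx; apply: ev_bd'; apply: bd_end; right.
  exact: lexx.
by apply; exists s => //; rewrite h2.
Qed.

Definition rep (R : realType) n (X : topologicalType) (x0 : X) (c : pin R n X x0) :
  Omega R n X x0 := projT1 (cid (pin_proj_surj c)).

Lemma repK (R : realType) n (X : topologicalType) (x0 : X) (c : pin R n X x0) :
  pin_proj (rep c) = c.
Proof. exact: (projT2 (cid (pin_proj_surj c))). Qed.

Definition Tu (R : realType) m (X : topologicalType) (x0 : X) (u : Omega R m.+1 X x0)
  (c : pin R m.+1 X x0) : pin R m.+1 X x0 := pin_proj (Lg u (rep c)).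

Lemma Tu_proj (R : realType) m (X : topologicalType) (x0 : X) (u f : Omega R m.+1 X x0) :
  Tu u (pin_proj f) = pin_proj (Lg u f).
Proof.
apply: pin_proj_eq; apply: Lg_hom; apply: pin_proj_eqP; exact: repK.
Qed.

Lemma Tu_cont (R : realType) m (X : topologicalType) (x0 : X) (u : Omega R m.+1 X x0) :
  continuous (Tu u).
Proof.
apply/continuousP => A hA.
change (open (@pin_proj R m.+1 X x0 @^-1` (Tu u @^-1` A))).
have -> : @pin_proj R m.+1 X x0 @^-1` (Tu u @^-1` A) = Lg u @^-1` (@pin_proj R m.+1 X x0 @^-1` A).
  by apply/seteqP; split => f /=; rewrite Tu_proj.
have hA' : open (@pin_proj R m.+1 X x0 @^-1` A) := hA.
exact: (proj1 (continuousP _) (@Lg_contO R m X x0 u) _ hA').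
Qed.

Lemma Tu_inv (R : realType) m (X : topologicalType) (x0 : X) (u : Omega R m.+1 X x0) :
  cancel (Tu u) (Tu (rev u)).
Proof.
move=> c; rewrite -[c]repK Tu_proj Tu_proj; apply: pin_proj_eq; exact: Lg_inv.
Qed.

Lemma Tu_inv' (R : realType) m (X : topologicalType) (x0 : X) (u : Omega R m.+1 X x0) :
  cancel (Tu (rev u)) (Tu u).
Proof.
move=> c; rewrite -[c]repK Tu_proj Tu_proj; apply: pin_proj_eq.
by have := Lg_inv (rev u) (rep c); rewrite rev_rev.
Qed.

Theorem proposition3p2 (R : realType) (X : topologicalType) (x0 : X) (n : nat)
  (hn : (1 <= n)%N) (a b : pin R n X x0) :
  exists h : pin R n X x0 -> pin R n X x0, homeomorphism h /\ h a = b.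
Proof.
case: n hn a b => [//|m] _ a b.
pose fa := rep a; pose fb := rep b.
exists (fun c => Tu fb (Tu (rev fa) c)); split.
  exists (fun c => Tu fa (Tu (rev fb) c)); split.
  - apply: (@comp_cont _ _ _ (Tu (rev fa)) (Tu fb)); exact: Tu_cont.
  - apply: (@comp_cont _ _ _ (Tu (rev fb)) (Tu fa)); exact: Tu_cont.
  - by move=> c /=; rewrite Tu_inv Tu_inv'.
  - by move=> c /=; rewrite Tu_inv Tu_inv'.
rewrite -[a]repK -[b]repK -/fa -/fb Tu_proj.
have -> : pin_proj (Lg (rev fa) fa) = pin_proj (Lg (rev fb) fb).
  apply: pin_proj_eq; apply: rh_trans (Lg_rev_cst fa) _; apply: rh_sym; exact: Lg_rev_cst.
rewrite Tu_proj; apply: pin_proj_eq.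
by have := Lg_inv (rev fb) fb; rewrite rev_rev.
Qed.
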